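(* Let $q=2^m$ with $m$ a positive integer. Let $\delta\in\mathbb{F}_{q^2}$, $b_1,b_2\in\mathbb{F}_q$ and $b_3\in\mathbb{F}_{q^2}$. Let $i$ be a non-negative integer with $i<2m$, let $j$ be the integer with $0\leq j<m$ and $j\equiv i\pmod m$, and let $d=\gcd(m,j)$. Let $$P(x)=b_1(x^q+x+\delta)^{2^i+q}+b_2(x^q+x+\delta)^{2^i+1}+b_3(x^q+x+\delta)^{2^i}+x,$$ and put $$A=(\delta+\delta^q)(b_1+b_2)+b_3+b_3^q,\quad B=1+(\delta^{2^iq}+\delta^{2^i})(b_1+b_2),$$ $$C=b_1(\delta^{2^iq+1}+\delta^{2^i+q})+b_2(\delta^{2^iq+q}+\delta^{2^i+1})+b_3^q\delta^{2^iq}+b_3\delta^{2^i}.$$ For $y$ define $G(y)=b_1y^{2^i+q}+b_2y^{2^i+1}+b_3y^{2^i}$. Then: (1) If $i\in\{0,m\}$, then $P$ permutes $\mathbb{F}_{q^2}$ if and only if $A+B\neq0$, and in that case $P^{-1}(x)=G\!\left((A+B)^{-1}(x^q+x)+(A+B)^{-1}C+\delta\right)+x$. (2) If $i\notin\{0,m\}$, $A=0$ and $B\neq0$, then $P$ permutes $\mathbb{F}_{q^2}$ and $P^{-1}(x)=G\!\left(B^{-1}(x^q+x)+B^{-1}C+\delta\right)+x$. (3) If $i\notin\{0,m\}$, $A\neq0$ and $B=0$, then $P$ permutes $\mathbb{F}_{q^2}$ and $P^{-1}(x)=G\!\left(A^{-2^{m-j}}(x^q+x)^{2^{m-j}}+(C/A)^{2^{m-j}}+\delta\right)+x$.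 (4) If $i\notin\{0,m\}$ and $AB\neq0$, then $P$ permutes $\mathbb{F}_{q^2}$ if and only if $N_{2^m/2^d}(B/A)\neq1$, and in that case $$P^{-1}(x)=G\!\left(\delta+\frac{N_{2^m/2^d}(B/A)}{1+N_{2^m/2^d}(B/A)}\sum_{k=0}^{m/d-1}\left(\frac{A}{B}\right)^{\frac{2^{(k+1)j}-1}{2^j-1}}\left(\frac{x^q+x}{A}+\frac{C}{A}\right)^{2^{kj}}\right)+x.$$
   Context: For $a\in\mathbb{F}_{2^m}$ and $d\mid m$, $N_{2^m/2^d}(a)=a^{(2^m-1)/(2^d-1)}$ is the norm to $\mathbb{F}_{2^d}$. The compositional inverse of a permutation polynomial $f$ of $\mathbb{F}_{Q}$ is the unique polynomial $f^{-1}$ (modulo $x^Q-x$) with $f(f^{-1}(c))=f^{-1}(f(c))=c$ for all $c\in\mathbb{F}_Q$. The auxiliary notation $G$ is only shorthand for writing out the three-term expression. *)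

(* Defs.v *)
From HB Require Import structures.
From mathcomp Require Import all_boot all_order all_algebra all_field.
Set Implicit Arguments. Unset Strict Implicit. Unset Printing Implicit Defensive.
Import GRing.Theory.
Local Open Scope ring_scope.

Section Defs.
Variables (F : finFieldType) (m : nat).

(* q = 2^m ; F is meant to be F_{q^2} *)
Definition qq : nat := (2 ^ m)%N.

Definition normF (d : nat) (a : F) : F := a ^+ ((2 ^ m - 1) %/ (2 ^ d - 1))%N.

Variables (i : nat) (delta b1 b2 b3 : F).

Definition Pfun (x : F) : F :=
  let y := x ^+ qq + x + delta in
  b1 * y ^+ (2 ^ i + qq) + b2 * y ^+ (2 ^ i + 1) + b3 * y ^+ (2 ^ i) + x.

Definition Gfun (y : F) : F :=
  b1 * y ^+ (2 ^ i + qq) + b2 * y ^+ (2 ^ i + 1) + b3 * y ^+ (2 ^ i).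

Definition Acoef : F := (delta + delta ^+ qq) * (b1 + b2) + b3 + b3 ^+ qq.

Definition Bcoef : F := 1 + (delta ^+ (2 ^ i * qq) + delta ^+ (2 ^ i)) * (b1 + b2).

Definition Ccoef : F :=
  b1 * (delta ^+ (2 ^ i * qq + 1) + delta ^+ (2 ^ i + qq))
  + b2 * (delta ^+ (2 ^ i * qq + qq) + delta ^+ (2 ^ i + 1))
  + b3 ^+ qq * delta ^+ (2 ^ i * qq) + b3 * delta ^+ (2 ^ i).

End Defs.

Definition is_inverse (F : Type) (f g : F -> F) : Prop :=
  forall c, f (g c) = c /\ g (f c) = c.

(* Main.v *)
Require Import Defs.
From HB Require Import structures.
From mathcomp Require Import all_boot all_order all_algebra all_field.
From mathcomp Require Import cyclic.
From mathcomp Require Import ring zify.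
Import GRing.Theory.
Local Open Scope ring_scope.
Set Implicit Arguments. Unset Strict Implicit. Unset Printing Implicit Defensive.

Lemma gcd_exp2 a b : (gcdn (2^a - 1) (2^b - 1) = 2^(gcdn a b) - 1)%N.
Proof.
have H : forall n a b, (a + b <= n)%N -> (b <= a)%N ->
   (gcdn (2^a - 1) (2^b - 1) = 2^(gcdn a b) - 1)%N.
  elim=> [|n IH] a' b' hn hba.
    have -> : a' = 0%N by lia.
    have -> : b' = 0%N by lia.
    by [].
  case: b' hn hba => [|b'] hn hba.
    by rewrite expn0 subnn !gcdn0.
  have e1 : (2^a' - 1 = 2^(a' - b'.+1) * (2^b'.+1 - 1) + (2^(a' - b'.+1) - 1))%N.
    rewrite mulnBr muln1 -expnD subnK //.
    have h1 : (1 <= 2^(a' - b'.+1))%N by rewrite expn_gt0.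
    have h2 : (2^(a' - b'.+1) <= 2^a')%N by rewrite leq_pexp2l // leq_subr.
    lia.
  have e2 : gcdn a' b'.+1 = gcdn (a' - b'.+1) b'.+1.
    by rewrite -{1}(subnK hba) gcdnC gcdnDr gcdnC.
  rewrite e1 gcdnC gcdnMDl gcdnC e2.
  case: (leqP b'.+1 (a' - b'.+1)) => h.
    by apply: IH => //; lia.
  rewrite gcdnC [gcdn (a' - _) _]gcdnC; apply: IH; lia.
case: (leqP b a) => h; first by apply: (H (a + b)).
by rewrite gcdnC [gcdn a b]gcdnC; apply: (H (a + b)) => //; [lia | apply: ltnW].
Qed.

Section Fin.
Variables (F : finFieldType) (m : nat).
Hypotheses (hm : (0 < m)%N) (hF : #|F| = (2 ^ (2 * m))%N).
Local Notation q := (qq m).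

Lemma char2 : (2%N \in [pchar F]).
Proof. exact: (card_finPcharP hF (isT : prime 2)). Qed.

Lemma two0 : (2 : F) = 0.
Proof. exact: (pcharf0 char2). Qed.

Lemma addxx (x : F) : x + x = 0.
Proof. exact: (addrr_pchar2 char2). Qed.

Lemma c2 (x y w : F) : x = y + 2 * w -> x = y.
Proof. by rewrite two0 mul0r addr0. Qed.

Lemma frob k (x y : F) : (x + y) ^+ (2 ^ k) = x ^+ (2^k) + y ^+ (2^k).
Proof.
elim: k => [|k IH]; first by rewrite expn0 !expr1.
rewrite expnSr !exprM IH.
by apply: (c2 (w := x^+(2^k) * y^+(2^k))); ring.
Qed.

Lemma card_qq : #|F| = (q * q)%N.
Proof. by rewrite hF /qq -expnD addnn -mul2n. Qed.

Lemma fqq (x : F) : x ^+ q ^+ q = x.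
Proof. by rewrite -exprM -card_qq expf_card. Qed.

Lemma fqD (x y : F) : (x + y) ^+ q = x ^+ q + y ^+ q.
Proof. exact: frob. Qed.

Lemma frob_sum k (I : Type) (r : seq I) (P : pred I) (f : I -> F) :
  (\sum_(i <- r | P i) f i) ^+ (2^k) = \sum_(i <- r | P i) f i ^+ (2^k).
Proof.
apply: (big_morph (fun x => x ^+ (2^k))) => [x y|]; first exact: frob.
by rewrite expr0n expn_eq0.
Qed.

Lemma expK (z : F) k : z ^+ q = z -> z ^+ (2 ^ k) = z ^+ (2 ^ (k %% m)).
Proof.
move=> hz.
have H : forall n, z ^+ (2 ^ (n * m)) = z.
  elim=> [|n IH]; first by rewrite mul0n expn0 expr1.
  by rewrite mulSn expnD exprM hz IH.
by rewrite {1}(divn_eq k m) expnD exprM H.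
Qed.

Lemma Kexp (z : F) n : z ^+ q = z -> (z ^+ n) ^+ q = z ^+ n.
Proof. by rewrite exprAC => ->. Qed.

Lemma KV (z : F) : z ^+ q = z -> (z^-1) ^+ q = z^-1.
Proof. by rewrite exprVn => ->. Qed.

Definition Tr (x : F) := x ^+ q + x.

Lemma TrK x : (Tr x) ^+ q = Tr x.
Proof. by rewrite /Tr fqD fqq addrC. Qed.

Lemma TrD x y : Tr (x + y) = Tr x + Tr y.
Proof. by rewrite /Tr fqD; ring. Qed.

Variables (i : nat) (delta b1 b2 b3 : F).
Hypotheses (hb1 : b1 ^+ q = b1) (hb2 : b2 ^+ q = b2).

Lemma keyT z : z ^+ q = z ->
  Tr (Gfun m i b1 b2 b3 (z + delta)) =
  Acoef m delta b1 b2 b3 * z ^+ (2 ^ i) + Bcoef m i delta b1 b2 * z + z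
  + Ccoef m i delta b1 b2 b3.
Proof.
move=> hz.
have eG : Gfun m i b1 b2 b3 (z + delta) =
   (z ^+ (2^i) + delta ^+ (2^i)) * (b1 * (z + delta ^+ q) + b2 * (z + delta) + b3).
  rewrite /Gfun !exprD expr1 frob fqD hz; ring.
have eU : (z ^+ (2^i) + delta ^+ (2^i)) ^+ q = z ^+ (2^i) + delta ^+ (2^i) ^+ q.
  by rewrite fqD exprAC hz.
have eV : (b1 * (z + delta ^+ q) + b2 * (z + delta) + b3) ^+ q
     = b1 * (z + delta) + b2 * (z + delta ^+ q) + b3 ^+ q.
  by rewrite !fqD !exprMn !fqD hb1 hb2 hz fqq.
rewrite /Tr eG exprMn eU eV /Acoef /Bcoef /Ccoef !exprD !expr1 !exprM.
move: (z ^+ (2^i)) (delta ^+ (2^i)) (delta ^+ q) (b3 ^+ q) => zp dp dq b3q.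
by apply: (c2 (w := zp * z * (b1 + b2) - z)); ring.
Qed.

End Fin.

Section Master.
Variables (F : finFieldType) (m : nat).
Hypotheses (hm : (0 < m)%N) (hF : #|F| = (2 ^ (2 * m))%N).
Local Notation q := (qq m).
Local Notation Tr := (@Tr F m).

Definition Kset := [set z : F | z ^+ q == z].

Lemma q_ge2 : (2 <= q)%N.
Proof. by rewrite /qq -{1}(expn1 2) leq_pexp2l. Qed.

Lemma inj_of_surj (L : F -> F) :
  (forall z, z ^+ q = z -> (L z) ^+ q = L z) ->
  (forall w, w ^+ q = w -> exists z, z ^+ q = z /\ L z = w) ->
  {in Kset &, injective L}.
Proof.
move=> hLK hs; apply/imset_injP.
have -> : L @: Kset = Kset.
  apply/eqP; rewrite eqEsubset; apply/andP; split.
    by apply/subsetP=> y /imsetP [z]; rewrite inE => /eqP hz ->; rewrite inE hLK.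
  apply/subsetP=> w; rewrite inE => /eqP /hs [z [hz <-]].
  by apply: imset_f; rewrite inE hz.
by [].
Qed.

Lemma prim_root_F : exists g : F, (q * q - 1)%N.-primitive_root g.
Proof.
have q2 := q_ge2.
pose rs := [seq x <- enum F | x != 0].
have : has (q * q - 1)%N.-primitive_root rs.
  apply: has_prim_root.
  - by rewrite subn_gt0; nia.
  - apply/allP=> x; rewrite mem_filter => /andP [nx _].
    rewrite unity_rootE; apply/eqP; apply: (mulIf nx).
    rewrite -exprSr mul1r subn1 prednK -?(card_qq hF) ?expf_card //.
    by rewrite (card_qq hF); nia.
  - by rewrite filter_uniq // enum_uniq.
  - rewrite size_filter -(card_qq hF).
    have -> : count (fun x : F => x != 0) (enum F) = #|predC1 (0:F)|.
      rewrite cardE /enum_mem size_filter; rewrite unlock /=. rewrite count_filter; apply: eq_count => x; rewrite /= !inE ?andbT //.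
    by rewrite cardC1 subn1.
by case/hasP=> g _ hg; exists g.
Qed.
End Master.

Section Master2.
Variables (F : finFieldType) (m : nat).
Hypotheses (hm : (0 < m)%N) (hF : #|F| = (2 ^ (2 * m))%N).
Local Notation q := (qq m).
Local Notation Tr := (@Tr F m).

Lemma theta_ex : exists th : F, Tr th = 1.
Proof.
have q2 := q_ge2 hm.
have [g hg] := prim_root_F hm hF.
have g0 : g != 0.
  apply/negP=> /eqP g0; have := prim_expr_order hg.
  have n0 : (0 < q * q - 1)%N by nia.
  by rewrite g0 expr0n (gtn_eqF n0) => /eqP; rewrite eq_sym oner_eq0.
have gq : g ^+ q != g.
  apply/negP=> /eqP e.
  have e1 : g ^+ (q - 1) = 1.
    apply: (mulIf g0); rewrite mul1r -exprSr subn1 prednK ?e //; lia.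
  move: e1 => /eqP; rewrite -(prim_order_dvd hg) => /dvdn_leq.
  have : (0 < q - 1)%N by lia.
  move=> h /(_ h); nia.
have T0 : Tr g != 0.
  apply: contra gq; rewrite /Tr addr_eq0 => /eqP ->.
  by rewrite (oppr_pchar2 (char2 hF)).
exists (g / Tr g).
rewrite /Tr exprMn exprVn (TrK hF) -mulrDl.
by rewrite -/(Tr g) divff.
Qed.

Lemma prim_root_K : exists h : F, (q - 1)%N.-primitive_root h.
Proof.
have q2 := q_ge2 hm.
have [g hg] := prim_root_F hm hF.
exists (g ^+ (q + 1)).
have := exp_prim_root hg (q + 1).
have e : (q * q - 1 = (q - 1) * (q + 1))%N.
  rewrite mulnDr muln1 mulnBl mul1n; nia.
by rewrite e gcdnMl mulnK //; lia.
Qed.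

Section MasterGen.
Variables (Gy : F -> F) (delta C0 : F) (L : F -> F).
Hypotheses (hT : forall z, z ^+ q = z -> Tr (Gy (z + delta)) = L z + z + C0)
  (hC0 : C0 ^+ q = C0) (hLK : forall z, z ^+ q = z -> (L z) ^+ q = L z).

Let P x := Gy (Tr x + delta) + x.

Lemma TrP x : Tr (P x) = L (Tr x) + C0.
Proof.
rewrite /P (TrD hF) hT ?(TrK hF) //.
by apply: (c2 hF (w := Tr x)); ring.
Qed.

Lemma master_inj : bijective P -> {in @Kset F m &, injective L}.
Proof.
case=> Pi PK KP; apply: inj_of_surj => // w hw.
have [th hth] := theta_ex.
pose c := (w + C0) * th.
have Tc : Tr c = w + C0.
  rewrite /Tr /c exprMn (fqD hF) hw hC0 -mulrDr.
  by rewrite -/(Tr th) hth mulr1.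
exists (Tr (Pi c)); split; first exact: (TrK hF).
by have := TrP (Pi c); rewrite KP Tc => /addIr.
Qed.

Variable Linv : F -> F.
Hypotheses (hLiK : forall w, w ^+ q = w -> (Linv w) ^+ q = Linv w)
  (hLL : forall w, w ^+ q = w -> L (Linv w) = w).

Lemma master_inv : is_inverse P (fun c => Gy (Linv (Tr c + C0) + delta) + c).
Proof.
have injL : {in @Kset F m &, injective L}.
  apply: inj_of_surj => // w hw; exists (Linv w); split; [exact: hLiK | exact: hLL].
have KD : forall x y : F, x ^+ q = x -> y ^+ q = y -> (x + y) ^+ q = x + y.
  by move=> x y hx hy; rewrite (fqD hF) hx hy.
have LinvL : forall z, z ^+ q = z -> Linv (L z) = z.
  move=> z hz; apply: injL; rewrite ?inE ?hLiK ?hLK ?hz //.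
  by rewrite hLL ?hLK.
move=> c; split.
  set w := Tr c + C0.
  have hw : w ^+ q = w by rewrite KD ?(TrK hF).
  set z := Linv w.
  have hz : z ^+ q = z by exact: hLiK.
  have Tg : Tr (Gy (z + delta) + c) = z.
    rewrite (TrD hF) hT // hLL // /w.
    by apply: (c2 hF (w := Tr c + C0)); ring.
  by rewrite /P Tg addrA (addxx hF) add0r.
rewrite TrP -addrA (addxx hF) // addr0 LinvL ?(TrK hF) //.
by rewrite /P addrA (addxx hF) add0r.
Qed.

End MasterGen.
End Master2.

Lemma is_inv_ext (T : Type) (f g g' : T -> T) : is_inverse f g -> g =1 g' -> is_inverse f g'.
Proof. by move=> h e c; rewrite -!e; exact: h. Qed.

Lemma bij_of_inv (T : Type) (f g : T -> T) : is_inverse f g -> bijective f.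
Proof. by move=> h; exists g => x; [exact: (h x).2 | exact: (h x).1]. Qed.

Section Cases.
Variables (F : finFieldType) (m : nat).
Hypotheses (hm : (0 < m)%N) (hF : #|F| = (2 ^ (2 * m))%N).
Local Notation q := (qq m).
Local Notation Tr := (@Tr F m).
Variables (delta b1 b2 b3 : F).
Hypotheses (hb1 : b1 ^+ q = b1) (hb2 : b2 ^+ q = b2).
Variables (i : nat).
Local Notation j := (i %% m)%N.
Local Notation A := (Acoef m delta b1 b2 b3).
Local Notation B := (Bcoef m i delta b1 b2).
Local Notation C := (Ccoef m i delta b1 b2 b3).
Local Notation P := (Pfun m i delta b1 b2 b3).
Local Notation G := (Gfun m i b1 b2 b3).

Lemma AK : A ^+ q = A.
Proof.
rewrite /Acoef !(fqD hF, exprMn) hb1 hb2 !(fqq hF); ring.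
Qed.

Lemma BK : B ^+ q = B.
Proof.
rewrite /Bcoef !exprM !(fqD hF, exprMn) expr1n hb1 hb2 !(fqq hF); ring.
Qed.

Lemma CK : C ^+ q = C.
Proof.
rewrite /Ccoef !exprD !expr1 !exprM !(fqD hF, exprMn) hb1 hb2 !(fqq hF); ring.
Qed.

Definition Lf (z : F) := A * z ^+ (2 ^ j) + B * z.

Lemma hTL z : z ^+ q = z -> Tr (G (z + delta)) = Lf z + z + C.
Proof. by move=> hz; rewrite keyT // (expK _ hz). Qed.

Lemma LK z : z ^+ q = z -> (Lf z) ^+ q = Lf z.
Proof. by move=> hz; rewrite /Lf (fqD hF) !exprMn AK BK (Kexp _ hz) hz. Qed.

Lemma KM (x y : F) : x ^+ q = x -> y ^+ q = y -> (x * y) ^+ q = x * y.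
Proof. by move=> hx hy; rewrite exprMn hx hy. Qed.

Lemma KD (x y : F) : x ^+ q = x -> y ^+ q = y -> (x + y) ^+ q = x + y.
Proof. by move=> hx hy; rewrite (fqD hF) hx hy. Qed.

Lemma inv_gen (Linv : F -> F) :
  (forall w, w ^+ q = w -> (Linv w) ^+ q = Linv w) ->
  (forall w, w ^+ q = w -> Lf (Linv w) = w) ->
  is_inverse P (fun c => G (Linv (Tr c + C) + delta) + c).
Proof.
move=> h1 h2; apply: (master_inv hF (L := Lf)) => //.
- exact: hTL.
- exact: CK.
- exact: LK.
Qed.

Lemma inj_gen : bijective P -> {in @Kset F m &, injective Lf}.
Proof.
move=> hP; apply: (master_inj hm hF (Gy := G) (delta := delta) (C0 := C)) => //.
- exact: hTL.
- exact: CK.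
- exact: LK.
Qed.

Lemma case1 : (i = 0%N \/ i = m) ->
  (bijective P <-> A + B != 0) /\
  (A + B != 0 ->
   is_inverse P (fun x => G ((A + B)^-1 * (x ^+ q + x) + (A + B)^-1 * C + delta) + x)).
Proof.
move=> hi.
have j0 : j = 0%N by case: hi => ->; rewrite ?mod0n ?modnn.
have Lz : forall z, Lf z = (A + B) * z.
  by move=> z; rewrite /Lf j0 expn0 expr1; ring.
have inv : A + B != 0 ->
   is_inverse P (fun x => G ((A + B)^-1 * (x ^+ q + x) + (A + B)^-1 * C + delta) + x).
  move=> nz.
  have h1 : forall w, w ^+ q = w -> ((A + B)^-1 * w) ^+ q = (A + B)^-1 * w.
    by move=> w hw; apply: KM => //; apply: KV; apply: KD; [exact: AK | exact: BK].
  have h2 : forall w, w ^+ q = w -> Lf ((A + B)^-1 * w) = w.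
    by move=> w hw; rewrite Lz mulrA (mulfV nz) mul1r.
  apply: (is_inv_ext (inv_gen h1 h2)) => c /=.
  by rewrite mulrDr.
split => //; split; last by move/inv/bij_of_inv.
move=> /inj_gen hinj; apply/negP => /eqP e.
have : Lf 1 = Lf 0 by rewrite !Lz e !mul0r.
have q0 : (q == 0%N) = false by rewrite /qq expn_eq0.
move/hinj; rewrite !inE expr1n expr0n q0 /= !eqxx => /(_ isT isT) /eqP.
by rewrite oner_eq0.
Qed.

Lemma case2 : (i <> 0%N /\ i <> m) -> A = 0 -> B != 0 ->
  bijective P /\
  is_inverse P (fun x => G (B^-1 * (x ^+ q + x) + B^-1 * C + delta) + x).
Proof.
move=> _ hA hB.
suff h : is_inverse P (fun x => G (B^-1 * (x ^+ q + x) + B^-1 * C + delta) + x).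
  by split=> //; exact: bij_of_inv h.
have h1 : forall w, w ^+ q = w -> (B^-1 * w) ^+ q = B^-1 * w.
  by move=> w hw; apply: KM => //; apply: KV; exact: BK.
have h2 : forall w, w ^+ q = w -> Lf (B^-1 * w) = w.
  by move=> w hw; rewrite /Lf hA mul0r add0r mulrA (mulfV hB) mul1r.
apply: (is_inv_ext (inv_gen h1 h2)) => c /=.
by rewrite mulrDr.
Qed.

Lemma j_pos : (i < 2 * m)%N -> (i <> 0%N /\ i <> m) -> (0 < j)%N.
Proof.
move=> hi [h0 hm'].
case: (ltnP i m) => h; first by rewrite modn_small //; lia.
have -> : i = (i - m + m)%N by lia.
rewrite modnDr modn_small; lia.
Qed.

Lemma case3 : (i < 2 * m)%N -> (i <> 0%N /\ i <> m) -> A != 0 -> B = 0 ->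
  bijective P /\
  is_inverse P (fun x => G ((A^-1) ^+ (2 ^ (m - j))%N * (x ^+ q + x) ^+ (2 ^ (m - j))%N
                              + (C / A) ^+ (2 ^ (m - j))%N + delta) + x).
Proof.
move=> hi hi' hA hB.
have jm : (j < m)%N by rewrite ltn_mod.
suff h : is_inverse P (fun x => G ((A^-1) ^+ (2 ^ (m - j))%N * (x ^+ q + x) ^+ (2 ^ (m - j))%N
                              + (C / A) ^+ (2 ^ (m - j))%N + delta) + x).
  by split=> //; exact: bij_of_inv h.
have h1 : forall w, w ^+ q = w -> ((w / A) ^+ (2 ^ (m - j))) ^+ q = (w / A) ^+ (2 ^ (m - j)).
  by move=> w hw; apply: Kexp; apply: KM => //; apply: KV; exact: AK.
have h2 : forall w, w ^+ q = w -> Lf ((w / A) ^+ (2 ^ (m - j))) = w.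
  move=> w hw; rewrite /Lf hB mul0r addr0 -exprM -expnD subnK; last exact: ltnW.
  have hwA : (w / A) ^+ q = w / A by apply: KM => //; apply: KV; exact: AK.
  by rewrite [_ ^+ (2 ^ m)]hwA mulrC divfK.
apply: (is_inv_ext (inv_gen h1 h2)) => c /=.
by rewrite mulrDl (frob hF) exprMn mulrC.
Qed.

End Cases.

Lemma modinj n j' x y : coprime n j' -> (x < n)%N -> (y < n)%N ->
  (x * j' %% n = y * j' %% n)%N -> x = y.
Proof.
move=> cop.
wlog yx : x y / (y <= x)%N.
  move=> H xn yn e; case: (leqP y x) => h; first exact: H.
  by symmetry; apply: H => //; exact: ltnW.
move=> xn yn e.
have : (n %| (x - y) * j')%N.
  rewrite mulnBl -eqn_mod_dvd; first by apply/eqP.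
  by rewrite leq_mul2r yx orbT.
rewrite Gauss_dvdl // => hd.
case E: (x - y)%N hd => [|k] hd; first lia.
have := dvdn_leq (ltn0Sn k) hd; lia.
Qed.

Lemma geo a K : (0 < a)%N -> ((2 ^ (K * a) - 1) %/ (2 ^ a - 1) = \sum_(l < K) 2 ^ (l * a))%N.
Proof.
move=> a0.
have h := predn_exp (2 ^ a) K.
have h2 : (1 < 2 ^ a)%N by rewrite -{1}(expn0 2) ltn_exp2l.
rewrite mulnC expnM !subn1 h mulKn; last by rewrite -subn1 subn_gt0.
by apply: eq_bigr => l _; rewrite -expnM mulnC.
Qed.

Lemma coprime_part m j : (0 < m)%N -> coprime (m %/ gcdn m j) (j %/ gcdn m j).
Proof.
move=> m0.
have d0 : (0 < gcdn m j)%N by rewrite gcdn_gt0 m0.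
rewrite /coprime -(eqn_pmul2r d0) mul1n muln_gcdl !divnK ?dvdn_gcdl ?dvdn_gcdr //.
Qed.

Section Norm.
Variables (F : finFieldType) (m : nat).
Hypotheses (hm : (0 < m)%N) (hF : #|F| = (2 ^ (2 * m))%N).
Local Notation q := (qq m).

Lemma norm_eq (a : F) j : a ^+ q = a ->
  a ^+ (\sum_(l < m %/ gcdn m j) 2 ^ (l * j)) = a ^+ (\sum_(l < m %/ gcdn m j) 2 ^ (l * gcdn m j)).
Proof.
move=> ha.
set d := gcdn m j; set n := (m %/ d)%N.
have d0 : (0 < d)%N by rewrite gcdn_gt0 hm.
have n0 : (0 < n)%N by rewrite divn_gt0 // dvdn_leq // dvdn_gcdl.
have hj : j = (j %/ d * d)%N by rewrite divnK // dvdn_gcdr.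
have hmn : m = (n * d)%N by rewrite divnK // dvdn_gcdl.
have cop : coprime n (j %/ d) by exact: coprime_part.
rewrite !expr_sum.
pose h := fun l : 'I_n => Ordinal (ltn_pmod (l * (j %/ d)) n0).
have injh : injective h.
  move=> l1 l2 /(congr1 val) /= e; apply: val_inj.
  exact: (modinj cop (ltn_ord l1) (ltn_ord l2) e).
rewrite [RHS](reindex_inj injh); apply: eq_bigr => l _ /=.
rewrite (expK _ ha); congr (a ^+ (2 ^ _)).
by rewrite muln_modl -mulnA -hj -hmn.
Qed.

End Norm.

Section Case4.
Variables (F : finFieldType) (m : nat).
Hypotheses (hm : (0 < m)%N) (hF : #|F| = (2 ^ (2 * m))%N).
Local Notation q := (qq m).
Local Notation Tr := (@Tr F m).
Variables (delta b1 b2 b3 : F).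
Hypotheses (hb1 : b1 ^+ q = b1) (hb2 : b2 ^+ q = b2).
Variables (i : nat).
Hypotheses (hi : (i < 2 * m)%N) (hi' : i <> 0%N /\ i <> m).
Local Notation j := (i %% m)%N.
Local Notation d := (gcdn m j).
Local Notation n := (m %/ d)%N.
Local Notation e := ((2 ^ m - 1) %/ (2 ^ d - 1))%N.
Local Notation A := (Acoef m delta b1 b2 b3).
Local Notation B := (Bcoef m i delta b1 b2).
Local Notation C := (Ccoef m i delta b1 b2 b3).
Local Notation P := (Pfun m i delta b1 b2 b3).
Local Notation G := (Gfun m i b1 b2 b3).
Local Notation L := (Lf m delta b1 b2 b3 i).
Local Notation ex k := ((2 ^ ((k + 1) * j) - 1) %/ (2 ^ j - 1))%N.

Lemma AK' : A ^+ q = A. Proof. exact: AK. Qed.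
Lemma BK' : B ^+ q = B. Proof. exact: BK. Qed.
Lemma CK' : C ^+ q = C. Proof. exact: CK. Qed.

Lemma j0 : (0 < j)%N. Proof. exact: (j_pos hm hF hi hi'). Qed.
Lemma d0 : (0 < d)%N. Proof. by rewrite gcdn_gt0 hm. Qed.
Lemma n0 : (0 < n)%N. Proof. by rewrite divn_gt0 ?d0 // dvdn_leq // dvdn_gcdl. Qed.
Lemma hjd : j = (j %/ d * d)%N. Proof. by rewrite divnK // dvdn_gcdr. Qed.
Lemma hmn : m = (n * d)%N. Proof. by rewrite divnK // dvdn_gcdl. Qed.

Lemma ee : (e * (2 ^ d - 1) = 2 ^ m - 1)%N.
Proof. by rewrite divnK // -gcd_exp2 dvdn_gcdl. Qed.

Lemma e_pos : (0 < e)%N.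
Proof.
have h1 : (1 < 2 ^ m)%N by rewrite -{1}(expn0 2) ltn_exp2l.
have := ee; case: e => [|//]; rewrite mul0n; lia.
Qed.

Lemma eE : e = (\sum_(l < n) 2 ^ (l * d))%N.
Proof. by rewrite -geo ?d0 // -hmn. Qed.

Lemma exE k : ex k = (\sum_(l < k.+1) 2 ^ (l * j))%N.
Proof. by rewrite -geo ?j0 // addn1. Qed.

Lemma exS k : ex k.+1 = (1 + ex k * 2 ^ j)%N.
Proof.
rewrite !exE big_ord_recl /= mul0n expn0 big_distrl /=; congr (_ + _)%N.
by apply: eq_bigr => l _; rewrite /bump /= add1n mulSn expnD mulnC.
Qed.

Lemma fixd (x : F) t : x ^+ (2 ^ d) = x -> x ^+ (2 ^ (d * t)) = x.
Proof.
move=> hx; elim: t => [|t IH]; first by rewrite muln0 expn0 expr1.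
by rewrite mulnS expnD exprM hx IH.
Qed.

Lemma fixj (x : F) : x ^+ (2 ^ d) = x -> x ^+ (2 ^ j) = x.
Proof. by move=> hx; rewrite hjd mulnC fixd. Qed.

Lemma Kunit (x : F) : x ^+ q = x -> x != 0 -> x ^+ (q - 1) = 1.
Proof.
move=> hx x0; apply: (mulIf x0); rewrite mul1r -exprSr subn1 prednK //.
by rewrite /qq expn_gt0.
Qed.


Lemma KK0 : (0 : F) \in Kset F m.
Proof. by rewrite inE expr0n /qq expn_eq0 /=. Qed.

Lemma norm1_not_inj : A * B != 0 -> normF m d (B / A) = 1 ->
  ~ {in Kset F m &, injective L}.
Proof.
move=> hAB hN hinj.
have [hA hB] : A != 0 /\ B != 0 by move: hAB; rewrite mulf_eq0 negb_or => /andP.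
set t := B / A.
have tK : t ^+ q = t by apply: KM; [exact: BK' | apply: KV; exact: AK'].
have t0 : t != 0 by rewrite mulf_neq0 ?invr_neq0.
have [h hh] := prim_root_K hm hF.
have [[s sl] hs] := prim_rootP hh (Kunit tK t0); rewrite /= in hs.
have he : h ^+ (s * e) = 1 by rewrite exprM -hs; exact: hN.
have dv : (2 ^ d - 1 %| s)%N.
  move: he => /eqP; rewrite -(prim_order_dvd hh) => hd.
  have : ((2 ^ d - 1) * e %| s * e)%N by rewrite [X in (X %| _)%N]mulnC ee.
  by rewrite dvdn_pmul2r ?e_pos.
set s' := (s %/ (2 ^ d - 1))%N.
have hs' : (s = s' * (2 ^ d - 1))%N by rewrite divnK.
have q1 : (0 < 2 ^ m - 1)%N by rewrite subn_gt0 -{1}(expn0 2) ltn_exp2l.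
have [x _ hx] := Bezoutl (2 ^ j - 1) q1.
rewrite gcd_exp2 in hx.
have [c' hc'] := dvdnP hx.
set u := h ^+ (s' * x).
have hu : t * u ^+ (2 ^ j - 1) = 1.
  have ex1 : (s' * (2 ^ d - 1) + s' * x * (2 ^ j - 1) = (2 ^ m - 1) * (s' * c'))%N.
    by rewrite -mulnA -mulnDr hc'; ring.
  rewrite hs hs' /u -!exprM -exprD ex1 exprM.
  by rewrite (prim_expr_order hh) expr1n.
have h0 : h != 0.
  apply/negP => /eqP h0; have := prim_expr_order hh.
  rewrite h0 expr0n; case: eqP => [/eqP|_ /eqP]; last by rewrite eq_sym oner_eq0.
  by move=> /eqP e0 _; have := q_ge2 hm; lia.
have u0 : u != 0 by rewrite expf_neq0.
set z := u^-1.
have z0 : z != 0 by rewrite invr_neq0.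
have zq1 : z ^+ (q - 1) = 1.
  by rewrite exprVn /u -exprM mulnC exprM (prim_expr_order hh) expr1n invr1.
have zK : z ^+ q = z.
  have : z ^+ (q - 1).+1 = z by rewrite exprSr zq1 mul1r.
  by rewrite subn1 prednK // /qq expn_gt0.
have hut : u ^+ (2 ^ j - 1) = t^-1.
  by apply: (mulfI t0); rewrite hu mulfV.
have hzj : z ^+ (2 ^ j - 1) = t by rewrite exprVn hut invrK.
have Lz : L z = 0.
  rewrite /Lf (_ : (2 ^ j = (2 ^ j - 1).+1)%N); last by rewrite subn1 prednK // expn_gt0.
  rewrite exprSr hzj mulrA /t mulrCA divff // mulr1 -mulrDl (addxx hF) mul0r //.
have L0 : L 0 = 0.
  by rewrite /Lf expr0n expn_eq0 /= !mulr0 addr0.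
apply/negP: z0; apply/negPn/eqP; apply: hinj; rewrite ?KK0 ?inE ?zK ?eqxx //.
by rewrite Lz L0.
Qed.

Lemma inv4 : A * B != 0 -> normF m d (B / A) != 1 ->
  is_inverse P (fun x =>
          let N := normF m d (B / A) in
          G (delta + N / (1 + N) *
               \sum_(0 <= k < (m %/ d)%N)
                  (A / B) ^+ ((2 ^ ((k + 1) * j) - 1) %/ (2 ^ j - 1))%N
                  * ((x ^+ q + x) / A + C / A) ^+ (2 ^ (k * j))%N) + x).
Proof.
move=> hAB hN.
have [hA hB] : A != 0 /\ B != 0 by move: hAB; rewrite mulf_eq0 negb_or => /andP.
set N := normF m d (B / A).
set a := A / B.
have aK : a ^+ q = a by apply: KM; [exact: AK' | apply: KV; exact: BK'].
have a0 : a != 0 by rewrite mulf_neq0 ?invr_neq0.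
set M := a ^+ e.
have NM : N * M = 1.
  by rewrite /N /normF /M -exprMn /a mulrA divfK // divff // expr1n.
have M0 : M != 0.
  by apply/negP => /eqP M0; move: NM; rewrite M0 mulr0 => /eqP; rewrite eq_sym oner_eq0.
have Mfix : M ^+ (2 ^ d) = M.
  have hM1 : M ^+ (2 ^ d - 1) = 1.
    by rewrite /M -exprM ee (Kunit aK a0 : a ^+ (2 ^ m - 1) = 1).
  have : M ^+ (2 ^ d - 1).+1 = M by rewrite exprS hM1 mulr1.
  by rewrite subn1 prednK // expn_gt0.
have Mj : M ^+ (2 ^ j) = M := fixj Mfix.
have Nj : N ^+ (2 ^ j) = N.
  apply: (mulIf M0); rewrite NM -{1}Mj -exprMn NM expr1n //.
have N1 : 1 + N != 0.
  by rewrite addr_eq0 (oppr_pchar2 (char2 hF)) eq_sym.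
set c := N / (1 + N).
have c1M : c * (1 + M) = 1.
  by rewrite /c mulrAC mulrDr mulr1 NM addrC divff.
have cj : c ^+ (2 ^ j) = c by rewrite /c exprMn exprVn (frob hF) expr1n Nj.
have BAK : (B / A) ^+ q = B / A by apply: KM; [exact: BK' | apply: KV; exact: AK'].
have cK : c ^+ q = c.
  apply: KM; first exact: Kexp.
  by apply: KV; apply: KD => //; [exact: expr1n | exact: Kexp].
have ex0 : ex 0 = 1%N.
  by rewrite add0n mul1n divnn subn_gt0 -{1}(expn0 2) ltn_exp2l ?j0.
have h1 : forall w, w ^+ q = w ->
   (c * \sum_(0 <= k < n) a ^+ ex k * (w / A) ^+ (2 ^ (k * j))) ^+ q
   = c * \sum_(0 <= k < n) a ^+ ex k * (w / A) ^+ (2 ^ (k * j)).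
  move=> w hw; apply: KM => //.
  have uK : (w / A) ^+ q = w / A by apply: KM => //; apply: KV; exact: AK'.
  rewrite (frob_sum hF m); apply: eq_bigr => k _.
  by apply: KM; apply: Kexp.
have h2 : forall w, w ^+ q = w ->
   L (c * \sum_(0 <= k < n) a ^+ ex k * (w / A) ^+ (2 ^ (k * j))) = w.
  move=> w hw.
  set u := w / A.
  have uK : u ^+ q = u by apply: KM => //; apply: KV; exact: AK'.
  pose f k := a ^+ (ex k) * u ^+ (2 ^ (k * j)).
  have fstep : forall k, a * (f k) ^+ (2 ^ j) = f k.+1.
    move=> k; rewrite /f exprMn -!exprM mulrA -exprS -add1n -exS -expnD -mulSnr.
    by [].
  set S := \sum_(0 <= k < n) _.
  have Ssig : a * S ^+ (2 ^ j) = \sum_(0 <= k < n) f k.+1.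
    by rewrite (frob_sum hF j) mulr_sumr; apply: eq_bigr => k _; exact: fstep.
  have f0 : f 0%N = a * u by rewrite /f ex0 mul0n expn0 !expr1.
  have nj : ((n * j) %% m = 0)%N.
    by apply/eqP; change (m %| n * j)%N; rewrite {1}hmn dvdn_pmul2l ?n0 // dvdn_gcdr.
  have fn : f n = a * M * u.
    rewrite /f (expK _ uK) nj expn0 expr1; congr (_ * _).
    rewrite -(prednK n0) exS exprD expr1 exprM exE prednK ?n0 //.
    by rewrite norm_eq // -eE Mj.
  have tel : forall n', (\sum_(0 <= k < n'.+1) f k.+1) + \sum_(0 <= k < n'.+1) f k
                       = f 0%N + f n'.+1.
    move=> n'; rewrite big_nat_recr // big_nat_recl //=.
    by apply: (c2 hF (w := \sum_(0 <= k < n') f k.+1)); ring.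
  have tele : a * S ^+ (2 ^ j) + S = a * u * (1 + M).
    rewrite Ssig; have := tel n.-1; rewrite prednK ?n0 // => ->.
    by rewrite f0 fn; ring.
  rewrite /Lf exprMn cj.
  have Aa : A = B * a by rewrite /a mulrC divfK.
  transitivity (c * B * (a * S ^+ (2 ^ j) + S)).
    by rewrite {1}Aa; ring.
  rewrite tele.
  transitivity (c * (1 + M) * ((B * a) * u)); first by ring.
  by rewrite c1M mul1r -Aa /u mulrC divfK.
apply: (is_inv_ext (inv_gen hF hb1 hb2 h1 h2)) => x /=.
rewrite [_ + delta]addrC; congr (G (_ + (_ * _)) + _).
by apply: eq_bigr => k _; rewrite mulrDl.
Qed.

Lemma case4 : A * B != 0 ->
     (bijective P <-> normF m d (B / A) != 1) /\
     (normF m d (B / A) != 1 ->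
        is_inverse P (fun x =>
          let N := normF m d (B / A) in
          G (delta + N / (1 + N) *
               \sum_(0 <= k < (m %/ d)%N)
                  (A / B) ^+ ((2 ^ ((k + 1) * j) - 1) %/ (2 ^ j - 1))%N
                  * ((x ^+ q + x) / A + C / A) ^+ (2 ^ (k * j))%N) + x)).
Proof.
move=> hAB; split; last exact: inv4.
split; last by move/(inv4 hAB)/bij_of_inv.
move=> /(inj_gen hm hF hb1 hb2) hinj; apply/negP => /eqP hN.
exact: (norm1_not_inj hAB hN hinj).
Qed.

End Case4.


Theorem theorem3p16 (F : finFieldType) (m : nat) (hm : (0 < m)%N)
  (hF : #|F| = (2 ^ (2 * m))%N)
  (delta b1 b2 b3 : F)
  (hb1 : b1 ^+ qq m = b1) (hb2 : b2 ^+ qq m = b2)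
  (i : nat) (hi : (i < 2 * m)%N) :
  let j := (i %% m)%N in
  let d := gcdn m j in
  let q := qq m in
  let P := Pfun m i delta b1 b2 b3 in
  let G := Gfun m i b1 b2 b3 in
  let A := Acoef m delta b1 b2 b3 in
  let B := Bcoef m i delta b1 b2 in
  let C := Ccoef m i delta b1 b2 b3 in
  ((i = 0%N \/ i = m) ->
     (bijective P <-> A + B != 0) /\
     (A + B != 0 ->
        is_inverse P (fun x => G ((A + B)^-1 * (x ^+ q + x) + (A + B)^-1 * C + delta) + x)))
  /\
  ((i <> 0%N /\ i <> m) -> A = 0 -> B != 0 ->
     bijective P /\
     is_inverse P (fun x => G (B^-1 * (x ^+ q + x) + B^-1 * C + delta) + x))
  /\
  ((i <> 0%N /\ i <> m) -> A != 0 -> B = 0 ->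
     bijective P /\
     is_inverse P (fun x => G ((A^-1) ^+ (2 ^ (m - j))%N * (x ^+ q + x) ^+ (2 ^ (m - j))%N
                              + (C / A) ^+ (2 ^ (m - j))%N + delta) + x))
  /\
  ((i <> 0%N /\ i <> m) -> A * B != 0 ->
     (bijective P <-> normF m d (B / A) != 1) /\
     (normF m d (B / A) != 1 ->
        is_inverse P (fun x =>
          let N := normF m d (B / A) in
          G (delta + N / (1 + N) *
               \sum_(0 <= k < (m %/ d)%N)
                  (A / B) ^+ ((2 ^ ((k + 1) * j) - 1) %/ (2 ^ j - 1))%N
                  * ((x ^+ q + x) / A + C / A) ^+ (2 ^ (k * j))%N) + x))).
Proof.
move=> j d q P G A B C.
split; first exact: (case1 hm hF delta b3 hb1 hb2).
split; first exact: (case2 hF hb1 hb2).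
split; first exact: (case3 hm hF hb1 hb2 hi).
move=> hi'; exact: (case4 hm hF hb1 hb2 hi hi').
Qed.
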